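(* Let $m,n$ be integers with $1<m<n-1$. Then there exist infinitely many $x\in\mathrm{Gr}(m,n)(\mathbb{Q})$ with $\ell(x)=0$.
   Context: For integers $1\le m\le n-1$, rational points $x\in\mathrm{Gr}(m,n)(\mathbb{Q})$ (the $m$-dimensional linear subspaces $W\subset\mathbb{Q}^n$) are identified with primitive lattices $\Lambda=W\cap\mathbb{Z}^n$ of rank $m$; a sublattice $\Lambda\subset\mathbb{Z}^n$ is primitive if $\Lambda_{\mathbb{R}}\cap\mathbb{Z}^n=\Lambda$, where $\Lambda_{\mathbb{R}}$ denotes the real span of $\Lambda$. All lattices live in Euclidean spaces, and $\mathrm{covol}(L)=\sqrt{\det(\langle b_i,b_j\rangle)_{i,j}}$ for any basis $(b_i)$ of $L$. The anticanonical height is $H(x)=\mathrm{covol}(\Lambda)^n$ and $h(x)=\log H(x)$. The dual lattice is $\Lambda^*=\{y\in\Lambda_{\mathbb{R}}:\langle y,z\rangle\in\mathbb{Z}\ \forall z\in\Lambda\}$; the factor lattice $\Lambda^\pi$ is the image of $\mathbb{Z}^n$ under the orthogonal projection $\mathbb{R}^n\to\Lambda_{\mathbb{R}}^\perp$. The tangent lattice is $T_\Lambda=\Lambda^*\otimes_{\mathbb{Z}}\Lambda^\pi$, a lattice of rank $m(n-m)$ in $\mathbb{R}^n\otimes\mathbb{R}^n$ with inner product $\langle a\otimes b,c\otimes d\rangle=\langle a,c\rangle\langle b,d\rangle$. For a lattice $L$ of rank $r$, its slope is $\mu(L)=-\frac1r\log\mathrm{covol}(L)$; the maximal slope $\mu_{\max}(L)$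 is the maximum of $\mu(M)$ over nonzero sublattices $M\subseteq L$; the minimal slope $\mu_{\min}(L)$ is the minimum of $\mu(L/M)$ over primitive sublattices $M\subsetneq L$, where $L/M$ is identified with the orthogonal projection of $L$ onto $M_{\mathbb{R}}^\perp\cap L_{\mathbb{R}}$. The freeness of $x$ (with $H(x)>1$) is $\ell(x)=\max\{m(n-m)\mu_{\min}(T_\Lambda),0\}/h(x)\in[0,1]$. *)

(* Defs.v *)
From HB Require Import structures.
From mathcomp Require Import all_boot all_order all_algebra.
From mathcomp Require Import all_classical all_reals all_analysis.
Set Implicit Arguments. Unset Strict Implicit. Unset Printing Implicit Defensive.
Import Order.TTheory GRing.Theory Num.Theory.
Local Open Scope classical_set_scope.
Local Open Scope ring_scope.

Section Lattices.
Variable R : realType.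

Definition dot (N : nat) (u v : 'rV[R]_N) : R := \sum_(i < N) u 0 i * v 0 i.

Definition is_basis (N : nat) (L : set 'rV[R]_N) (B : seq 'rV[R]_N) : Prop :=
  free B /\
  L = [set v | exists z : 'I_(size B) -> int, v = \sum_(i < size B) (z i)%:~R *: B`_i].

Definition is_lattice (N : nat) (L : set 'rV[R]_N) : Prop := exists B, is_basis L B.

Definition lbasis (N : nat) (L : set 'rV[R]_N) : seq 'rV[R]_N := xget [::] (is_basis L).

Definition rank (N : nat) (L : set 'rV[R]_N) : nat := size (lbasis L).

Definition gram (N : nat) (B : seq 'rV[R]_N) : 'M[R]_(size B) :=
  \matrix_(i, j) dot B`_i B`_j.

Definition covol (N : nat) (L : set 'rV[R]_N) : R := Num.sqrt (\det (gram (lbasis L))).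

Definition slope (N : nat) (L : set 'rV[R]_N) : R := - ln (covol L) / (rank L)%:R.

Definition rspan (N : nat) (L : set 'rV[R]_N) : set 'rV[R]_N :=
  [set v | exists s : seq 'rV[R]_N, (forall x, x \in s -> L x) /\ v \in span s].

Definition perp_proj (N : nat) (V : set 'rV[R]_N) (v : 'rV[R]_N) : 'rV[R]_N :=
  xget 0 [set w | V (v - w) /\ forall u, V u -> dot w u = 0].

Definition sublattice (N : nat) (M L : set 'rV[R]_N) : Prop := is_lattice M /\ M `<=` L.

Definition primitive_in (N : nat) (M L : set 'rV[R]_N) : Prop :=
  sublattice M L /\ rspan M `&` L = M.

(* L/M, identified with the orthogonal projection of L onto M_R^perp ∩ L_R *)
Definition quot (N : nat) (L M : set 'rV[R]_N) : set 'rV[R]_N := perp_proj (rspan M) @` L.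

Definition mu_min (N : nat) (L : set 'rV[R]_N) : R :=
  inf [set slope (quot L M) | M in [set M | primitive_in M L /\ M <> L]].

Definition Zn (n : nat) : set 'rV[R]_n := [set map_mx (fun z : int => z%:~R) z | z in [set: 'rV[int]_n]].

(* rational points of Gr(m,n) as primitive rank-m sublattices of Z^n *)
Definition grass_pt (m n : nat) (L : set 'rV[R]_n) : Prop :=
  primitive_in L (@Zn n) /\ rank L = m.

Definition dual (N : nat) (L : set 'rV[R]_N) : set 'rV[R]_N :=
  [set y | rspan L y /\ forall z, L z -> exists k : int, dot y z = k%:~R].

Definition factor (n : nat) (L : set 'rV[R]_n) : set 'rV[R]_n := perp_proj (rspan L) @` @Zn n.

(* a ⊗ b in R^n ⊗ R^n = R^(n*n); <a⊗b, c⊗d> = <a,c><b,d> *)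
Definition tens (n : nat) (a b : 'rV[R]_n) : 'rV[R]_(n * n) := mxvec (a^T *m b).

Definition tensor_lattice (n : nat) (A B : set 'rV[R]_n) : set 'rV[R]_(n * n) :=
  [set v | exists s : seq ('rV[R]_n * 'rV[R]_n),
     (forall p, p \in s -> A p.1 /\ B p.2) /\ v = \sum_(p <- s) tens p.1 p.2].

Definition tangent (n : nat) (L : set 'rV[R]_n) : set 'rV[R]_(n * n) :=
  tensor_lattice (dual L) (factor L).

Definition height (n : nat) (L : set 'rV[R]_n) : R := covol L ^+ n.
Definition logheight (n : nat) (L : set 'rV[R]_n) : R := ln (height L).

Definition freeness (m n : nat) (L : set 'rV[R]_n) : R :=
  Num.max ((m * (n - m))%N%:R * mu_min (tangent L)) 0 / logheight L.

End Lattices.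

(* Main.v *)
Require Import Defs.
From HB Require Import structures.
From mathcomp Require Import all_boot all_order all_algebra.
From mathcomp Require Import all_classical all_reals all_analysis.
From mathcomp Require Import zify ring lra.
Import Order.TTheory GRing.Theory Num.Theory.
Local Open Scope classical_set_scope.
Local Open Scope ring_scope.

Set Implicit Arguments. Unset Strict Implicit. Unset Printing Implicit Defensive.

Section Gen.
Variable R : realType.
Variable N : nat.
Implicit Types (u v w : 'rV[R]_N) (S : seq 'rV[R]_N).

Local Notation dot := (@dot R N).

Lemma dotC u v : dot u v = dot v u.
Proof. by rewrite /dot; apply: eq_bigr => i _; rewrite mulrC. Qed.

Lemma dotDl u v w : dot (u + v) w = dot u w + dot v w.
Proof. by rewrite /dot -big_split; apply: eq_bigr => i _; rewrite mxE mulrDl. Qed.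

Lemma dotZl a u w : dot (a *: u) w = a * dot u w.
Proof. by rewrite /dot mulr_sumr; apply: eq_bigr => i _; rewrite mxE mulrA. Qed.

Lemma dotNl u w : dot (- u) w = - dot u w.
Proof. by rewrite -scaleN1r dotZl mulN1r. Qed.

Lemma dotBl u v w : dot (u - v) w = dot u w - dot v w.
Proof. by rewrite dotDl dotNl. Qed.

Lemma dot0l w : dot 0 w = 0.
Proof. by rewrite /dot big1 // => i _; rewrite mxE mul0r. Qed.

Lemma dotDr u v w : dot w (u + v) = dot w u + dot w v.
Proof. by rewrite dotC dotDl !(dotC w). Qed.
Lemma dotZr a u w : dot w (a *: u) = a * dot w u.
Proof. by rewrite dotC dotZl dotC. Qed.
Lemma dotNr u w : dot w (- u) = - dot w u.
Proof. by rewrite dotC dotNl dotC. Qed.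
Lemma dotBr u v w : dot w (u - v) = dot w u - dot w v.
Proof. by rewrite dotDr dotNr. Qed.
Lemma dot0r w : dot w 0 = 0.
Proof. by rewrite dotC dot0l. Qed.

Lemma dot_suml (I : Type) (r : seq I) (P : pred I) (F : I -> 'rV[R]_N) w :
  dot (\sum_(i <- r | P i) F i) w = \sum_(i <- r | P i) dot (F i) w.
Proof. exact: (big_morph (fun x => dot x w) (fun x y => dotDl x y w) (dot0l w)). Qed.

Lemma dot_sumr (I : Type) (r : seq I) (P : pred I) (F : I -> 'rV[R]_N) w :
  dot w (\sum_(i <- r | P i) F i) = \sum_(i <- r | P i) dot w (F i).
Proof. by rewrite dotC dot_suml; apply: eq_bigr => i _; rewrite dotC. Qed.

Lemma dot_ge0 u : 0 <= dot u u.
Proof. by rewrite /dot sumr_ge0 // => i _; rewrite -expr2 sqr_ge0. Qed.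

Lemma dot_eq0 u : dot u u = 0 -> u = 0.
Proof.
move=> /eqP; rewrite /dot psumr_eq0 => [/allP H|i _]; last by rewrite -expr2 sqr_ge0.
apply/rowP => j; rewrite mxE; have := H j (mem_index_enum _).
by rewrite /= mulf_eq0 orbb => /eqP.
Qed.

Definition Zspan S : set 'rV[R]_N :=
  [set v | exists z : 'I_(size S) -> int, v = \sum_(i < size S) (z i)%:~R *: S`_i].

Definition orthfam S := [/\ uniq S,
  (forall s t, s \in S -> t \in S -> s != t -> dot s t = 0) &
  (forall s, s \in S -> 0 < dot s s)].

Lemma orth_nth S (i j : 'I_(size S)) : orthfam S ->
  dot S`_i S`_j = if i == j then dot S`_i S`_i else 0.
Proof.
case=> U O _; case: eqP => [->//|/eqP ij]; apply: O; rewrite ?mem_nth //.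
by rewrite nth_uniq.
Qed.

Lemma orth_span X r : (forall t, t \in X -> dot r t = 0) ->
  forall u, u \in <<X>>%VS -> dot r u = 0.
Proof.
move=> H u Hu; rewrite (coord_span (X:=in_tuple X) Hu) dot_sumr big1 // => i _.
by rewrite dotZr H ?mulr0 // mem_nth.
Qed.

Lemma sum_dot_seq S (c : 'rV[R]_N -> R) s0 : orthfam S -> s0 \in S ->
  dot (\sum_(s <- S) c s *: s) s0 = c s0 * dot s0 s0.
Proof.
move=> [U O _] s0S; rewrite dot_suml (bigD1_seq s0) //= dotZl big_seq_cond big1 ?addr0 //.
by move=> s /andP[sS ns]; rewrite dotZl O ?mulr0.
Qed.

Lemma expand S v : orthfam S -> v \in <<S>>%VS ->
  v = \sum_(s <- S) (dot v s / dot s s) *: s.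
Proof.
move=> oS vS; apply/eqP; rewrite -subr_eq0; apply/eqP.
set x := v - _.
have xS : x \in <<S>>%VS.
  rewrite rpredB // big_seq; apply: rpred_sum => s sS.
  by rewrite rpredZ // memv_span.
have H : forall t, t \in S -> dot x t = 0.
  move=> t tS; rewrite dotBl sum_dot_seq // mulfVK ?subrr //.
  by case: oS => _ _ /(_ t tS); rewrite lt0r => /andP[].
by apply: dot_eq0; apply: orth_span xS.
Qed.

Lemma zspan_span S v : Zspan S v -> v \in <<S>>%VS.
Proof.
by case=> z ->; rewrite rpred_sum // => i _; rewrite rpredZ // memv_span // mem_nth.
Qed.

Lemma Zspan_mem S s : s \in S -> Zspan S s.
Proof.
move=> sS; have hi : (index s S < size S)%N by rewrite index_mem.
pose i := Ordinal hi.
exists (fun j => (j == i)%:Z); rewrite (bigD1 i) //= eqxx scale1r nth_index //.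
by rewrite big1 ?addr0 // => j /negbTE ->; rewrite scale0r.
Qed.

Lemma Zspan0 S : Zspan S 0.
Proof. by exists (fun _ => 0); rewrite big1 // => i _; rewrite scale0r. Qed.

Lemma ZspanD S x y : Zspan S x -> Zspan S y -> Zspan S (x + y).
Proof.
case=> z -> [w ->]; exists (fun i => z i + w i); rewrite -big_split.
by apply: eq_bigr => i _; rewrite intrD scalerDl.
Qed.

Lemma ZspanZ S (k : int) x : Zspan S x -> Zspan S (k%:~R *: x).
Proof.
case=> z ->; exists (fun i => k * z i); rewrite scaler_sumr.
by apply: eq_bigr => i _; rewrite scalerA intrM.
Qed.

Lemma Zspan_sum S (I : Type) (r : seq I) (F : I -> 'rV[R]_N) :
  (forall i, Zspan S (F i)) -> Zspan S (\sum_(i <- r) F i).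
Proof. by move=> H; elim/big_ind: _ => //; [apply: Zspan0 | apply: ZspanD]. Qed.

Lemma orth_free S : orthfam S -> free S.
Proof.
move=> oS; apply/(freeP (X:=in_tuple S)) => k Hk i.
have := congr1 (fun x => dot x S`_i) Hk; rewrite dot0l dot_suml.
rewrite (bigD1 i) //= big1 ?addr0.
  rewrite dotZl => /eqP; rewrite mulf_eq0 => /orP[/eqP //|].
  by case: oS => _ _ /(_ _ (mem_nth 0 (ltn_ord i))); rewrite lt0r => /andP[/negbTE ->].
by move=> j ji; rewrite dotZl (orth_nth j i oS) (negbTE ji) mulr0.
Qed.

Lemma ZspanP S v : orthfam S ->
  Zspan S v <-> (v \in <<S>>%VS /\ forall s, s \in S -> dot v s / dot s s \is a Num.int).
Proof.
move=> oS; have [U O P] := oS; split.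
  move=> Hv; split; first exact: zspan_span.
  case: Hv => z -> s sS; rewrite -(nth_index 0 sS).
  have hi : (index s S < size S)%N by rewrite index_mem.
  pose i := Ordinal hi.
  have -> : index s S = i by [].
  rewrite dot_suml (bigD1 i) //= big1 ?addr0.
    rewrite dotZl mulfK ?intr_int //.
    by have := P _ (mem_nth 0 (ltn_ord i)); rewrite lt0r => /andP[].
  by move=> j ji; rewrite dotZl (orth_nth j i oS) (negbTE ji) mulr0.
move=> [vS H]; exists (fun i => Num.floor (dot v S`_i / dot S`_i S`_i)).
rewrite {1}(expand oS vS) (big_nth 0) big_mkord; apply: eq_bigr => i _.
by rewrite floorK // H // mem_nth.
Qed.

End Gen.

Set Implicit Arguments. Unset Strict Implicit. Unset Printing Implicit Defensive.

Section Gen2.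
Variable R : realType.
Variable N : nat.
Implicit Types (u v w : 'rV[R]_N) (S : seq 'rV[R]_N).
Local Notation dot := (@dot R N).

Lemma rspan_Zspan S : rspan (Zspan S) = [set v | v \in <<S>>%VS].
Proof.
apply/seteqP; split => v /=.
  case=> s [Hs vs].
  have sub : (span s <= span S)%VS.
    by apply/span_subvP => x xs; exact: zspan_span (Hs x xs).
  exact: (subvP sub v vs).
move=> vS; exists S; split => // x xS; exact: Zspan_mem.
Qed.

Lemma perp_projE X v w : (v - w) \in <<X>>%VS ->
  (forall u, u \in <<X>>%VS -> dot w u = 0) ->
  perp_proj [set u | u \in <<X>>%VS] v = w.
Proof.
move=> H1 H2; apply: xget_unique => [//|y [Hy1 Hy2]].
have dS : y - w \in <<X>>%VS.
  have -> : y - w = (v - w) - (v - y) by rewrite opprB [RHS]addrC [RHS]addrA subrK.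
  by rewrite rpredB.
apply/eqP; rewrite -subr_eq0; apply/eqP; apply: dot_eq0.
by rewrite dotBl Hy2 // H2 // subrr.
Qed.

Definition rowsmx S : 'M[R]_(size S, N) := \matrix_(i, j) S`_i 0 j.

Lemma gram_rowsmx S : gram S = rowsmx S *m (rowsmx S)^T.
Proof.
by apply/matrixP => i j; rewrite !mxE; apply: eq_bigr => k _; rewrite !mxE.
Qed.

Lemma free_rowsmx S : free S -> forall w : 'rV_(size S), w *m rowsmx S = 0 -> w = 0.
Proof.
move=> /(freeP (X:=in_tuple S)) fS w; rewrite mulmx_sum_row => Hw.
apply/rowP => i; rewrite mxE; apply: (fS (fun i => w 0 i)) => //.
rewrite -[RHS]Hw; apply: eq_bigr => j _; congr (_ *: _).
by apply/rowP => k; rewrite !mxE.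
Qed.

Lemma det_gram_eq p q (X : 'M[R]_(p,N)) (Y : 'M[R]_(q,N)) (U : 'M[int]_(q,p))
  (V : 'M[int]_(p,q)) : p = q -> Y = map_mx intr U *m X -> X = map_mx intr V *m Y ->
  (forall w : 'rV_p, w *m X = 0 -> w = 0) -> \det (X *m X^T) = \det (Y *m Y^T).
Proof.
move=> epq; subst q => HY HX fX.
have VU : map_mx intr V *m map_mx intr U = 1 :> 'M[R]_p.
  apply/row_matrixP => i; apply/eqP; rewrite -subr_eq0; apply/eqP.
  rewrite -linearB /=; apply: fX.
  rewrite -row_mul mulmxBl -mulmxA -HY -HX mul1mx subrr.
  by apply/rowP => j; rewrite !mxE.
have dU : (\det (map_mx (intr : int -> R) U)) ^+ 2 = 1.
  have : (\det V * \det U)%:~R = 1 :> R.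
    by rewrite -det_mulmx -(det_map_mx (intr : {rmorphism int -> R})) map_mxM VU det1.
  rewrite -[1]/((1%:Z)%:~R) => /eqP; rewrite eqr_int => /eqP /intUnitRing.unitzPl.
  rewrite (det_map_mx (intr : {rmorphism int -> R})).
  by rewrite qualifE /= => /orP[] /eqP ->; rewrite ?expr1n // sqrrN expr1n.
rewrite HY trmx_mul.
set A := map_mx intr U.
have -> : A *m X *m (X^T *m A^T) = A *m (X *m X^T) *m A^T by rewrite !mulmxA.
by rewrite !det_mulmx det_tr mulrAC -expr2 dU mul1r.
Qed.

End Gen2.

Set Implicit Arguments. Unset Strict Implicit. Unset Printing Implicit Defensive.

Section Gen3.
Variable R : realType.
Variable N : nat.
Implicit Types (u v w : 'rV[R]_N) (S B : seq 'rV[R]_N) (L : set 'rV[R]_N).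
Local Notation dot := (@dot R N).

Lemma basis_span L B (B' : seq 'rV[R]_N) : is_basis L B -> is_basis L B' -> (span B <= span B')%VS.
Proof.
move=> [_ ->] [_ HL]; apply/span_subvP => x xB.
have : Zspan B x by apply: Zspan_mem.
rewrite /Zspan in HL *; rewrite HL; exact: zspan_span.
Qed.

Lemma basis_size L B (B' : seq 'rV[R]_N) : is_basis L B -> is_basis L B' -> size B = size B'.
Proof.
move=> hB hB'; have e : span B = span B'.
  by apply/subv_anti/andP; split; apply: basis_span; eassumption.
by move: hB hB' => [/eqP fB _] [/eqP fB' _]; rewrite -fB -fB' e.
Qed.

Lemma basis_comb L B (B' : seq 'rV[R]_N) : is_basis L B -> is_basis L B' ->
  exists U : 'M[int]_(size B', size B), rowsmx B' = map_mx intr U *m rowsmx B.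
Proof.
move=> [_ HL] [_ HL'].
have H : forall j : 'I_(size B'), exists z : 'I_(size B) -> int,
    B'`_j = \sum_(i < size B) (z i)%:~R *: B`_i.
  move=> j; have : Zspan B' B'`_j by apply: Zspan_mem; rewrite mem_nth.
  by rewrite /Zspan -HL' HL.
have [f Hf] := choice H.
exists (\matrix_(j, i) f j i); apply/matrixP => j k; rewrite !mxE Hf.
rewrite summxE; apply: eq_bigr => i _; by rewrite !mxE.
Qed.

Lemma basis_det_gram L B (B' : seq 'rV[R]_N) : is_basis L B -> is_basis L B' ->
  \det (gram B) = \det (gram B').
Proof.
move=> hB hB'; have [U HU] := basis_comb hB hB'; have [V HV] := basis_comb hB' hB.
rewrite !gram_rowsmx; apply: (det_gram_eq (U := U) (V := V)) => //.
  exact: basis_size hB hB'.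
by apply: free_rowsmx; case: hB.
Qed.

Lemma covol_basis L B : is_basis L B -> covol L = Num.sqrt (\det (gram B)).
Proof.
move=> hB; rewrite /covol /lbasis; congr Num.sqrt; apply: (basis_det_gram (L := L)) => //.
by apply: xgetPex; exists B.
Qed.

Lemma rank_basis L B : is_basis L B -> rank L = size B.
Proof.
move=> hB; rewrite /rank /lbasis; apply: (basis_size (L := L)) => //.
by apply: xgetPex; exists B.
Qed.

Lemma det_gram_orth S : orthfam S -> \det (gram S) = \prod_(i < size S) dot S`_i S`_i.
Proof.
move=> oS; have -> : gram S = diag_mx (\row_(i < size S) dot S`_i S`_i).
  apply/matrixP => i j; rewrite !mxE (orth_nth i j oS).
  by case: (i == j); rewrite ?mulr1n ?mulr0n.
by rewrite det_diag; apply: eq_bigr => i _; rewrite mxE.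
Qed.

Lemma orth_basis S : orthfam S -> is_basis (Zspan S) S.
Proof. by move=> oS; split => //; apply: orth_free. Qed.

End Gen3.

Set Implicit Arguments. Unset Strict Implicit. Unset Printing Implicit Defensive.

Section Tens.
Variable R : realType.
Variable n : nat.
Implicit Types (a b c d : 'rV[R]_n).

Lemma tensE a b i j : tens a b 0 (mxvec_index i j) = a 0 i * b 0 j.
Proof. by rewrite /tens mxvecE !mxE big_ord1 !mxE. Qed.

Lemma dot_tens a b c d : dot (tens a b) (tens c d) = dot a c * dot b d.
Proof.
rewrite /dot (reindex _ (curry_mxvec_bij n n)) /=.
transitivity (\sum_(p : 'I_n * 'I_n) (a 0 p.1 * c 0 p.1) * (b 0 p.2 * d 0 p.2)).
  by apply: eq_bigr => -[i j] _ /=; rewrite !tensE mulrACA.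
by rewrite -(pair_bigA _ (fun i j => (a 0 i * c 0 i) * (b 0 j * d 0 j))) big_distrlr.
Qed.

Lemma tensDl a b c : tens (a + b) c = tens a c + tens b c.
Proof. by rewrite /tens linearD /= mulmxDl linearD. Qed.
Lemma tensDr a b c : tens c (a + b) = tens c a + tens c b.
Proof. by rewrite /tens mulmxDr linearD. Qed.
Lemma tensZl k a c : tens (k *: a) c = k *: tens a c.
Proof. by rewrite /tens linearZ /= -scalemxAl linearZ. Qed.
Lemma tensZr k a c : tens c (k *: a) = k *: tens c a.
Proof. by rewrite /tens -scalemxAr linearZ. Qed.
Lemma tens0l c : tens 0 c = 0.
Proof. by rewrite /tens linear0 mul0mx linear0. Qed.
Lemma tens0r c : tens c 0 = 0.
Proof. by rewrite /tens mulmx0 linear0. Qed.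

Lemma tens_suml (I : Type) (r : seq I) (F : I -> 'rV[R]_n) c :
  tens (\sum_(i <- r) F i) c = \sum_(i <- r) tens (F i) c.
Proof. exact: (big_morph (fun x => tens x c) (fun x y => tensDl x y c) (tens0l c)). Qed.
Lemma tens_sumr (I : Type) (r : seq I) (F : I -> 'rV[R]_n) c :
  tens c (\sum_(i <- r) F i) = \sum_(i <- r) tens c (F i).
Proof. exact: (big_morph (fun x => tens c x) (fun x y => tensDr x y c) (tens0r c)). Qed.

End Tens.

Set Implicit Arguments. Unset Strict Implicit. Unset Printing Implicit Defensive.

Section Gen5.
Variable R : realType.
Variable N : nat.
Implicit Types (u v w : 'rV[R]_N) (S C : seq 'rV[R]_N).
Local Notation dot := (@dot R N).

Lemma Zspan_sum_in S (I : eqType) (r : seq I) (F : I -> 'rV[R]_N) :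
  (forall i, i \in r -> Zspan S (F i)) -> Zspan S (\sum_(i <- r) F i).
Proof.
move=> H; rewrite big_seq; elim/big_ind: _ => //; [apply: Zspan0 | apply: ZspanD].
Qed.

Lemma orth_map (X : eqType) (T : seq X) (f : X -> 'rV[R]_N) : uniq T ->
  (forall x y, x \in T -> y \in T -> x != y -> dot (f x) (f y) = 0) ->
  (forall x, x \in T -> 0 < dot (f x) (f x)) -> orthfam (map f T).
Proof.
move=> U O P; split.
- rewrite map_inj_in_uniq // => x y xT yT fxy; apply/eqP; apply: contraT => nxy.
  have h := P x xT; have := O x y xT yT nxy; rewrite -fxy => h0.
  by rewrite h0 ltxx in h.
- move=> s t /mapP[x xT ->] /mapP[y yT ->] nst; apply: O => //.
  by apply: contraNneq nst => ->.
- by move=> s /mapP[x xT ->]; apply: P.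
Qed.

Definition nrm u := (dot u u)^-1 *: u.

Lemma dot_nrm u v : dot (nrm u) (nrm v) = (dot u u)^-1 * (dot v v)^-1 * dot u v.
Proof. by rewrite /nrm dotZl dotZr mulrA. Qed.

Lemma orthfam_nrm S : orthfam S -> orthfam (map nrm S).
Proof.
move=> [U O P]; apply: orth_map => // [x y xS yS nxy|x xS].
  by rewrite dot_nrm (O x y) ?mulr0.
rewrite dot_nrm; have := P x xS => h.
by rewrite mulrC mulrA divff ?gt_eqF // mul1r invr_gt0.
Qed.

Lemma coef_nrm y s : 0 < dot s s -> dot y (nrm s) / dot (nrm s) (nrm s) = dot y s.
Proof.
move=> h; rewrite dot_nrm /nrm dotZr.
have hd : dot s s != 0 by rewrite gt_eqF.
by field.
Qed.

Lemma nrm_span S s : s \in S -> nrm s \in <<S>>%VS.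
Proof. by move=> sS; rewrite rpredZ // memv_span. Qed.

Lemma span_nrm S s : orthfam S -> s \in S -> s \in <<map nrm S>>%VS.
Proof.
move=> [_ _ P] sS; have -> : s = dot s s *: nrm s.
  by rewrite /nrm scalerA divff ?scale1r // gt_eqF // P.
by rewrite rpredZ // memv_span // map_f.
Qed.

Lemma span_nrm_eq S : orthfam S -> span (map nrm S) = span S.
Proof.
move=> oS; apply/subv_anti/andP; split; apply/span_subvP => x.
  by move=> /mapP[s sS ->]; apply: nrm_span.
by move=> xS; apply: span_nrm.
Qed.

Lemma dual_Zspan S : orthfam S -> dual (Zspan S) = Zspan (map nrm S).
Proof.
move=> oS; have oS' := orthfam_nrm oS; have [U O P] := oS.
apply/seteqP; split => y.
  move=> [] /=; rewrite rspan_Zspan /= => yS H; apply/(ZspanP _ oS'); split.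
    by rewrite span_nrm_eq.
  move=> t /mapP[s sS ->]; rewrite coef_nrm ?P //.
  by have [k ->] := H s (Zspan_mem sS); rewrite intr_int.
move=> /(ZspanP _ oS') [yS H]; split.
  by rewrite /= rspan_Zspan /= -(span_nrm_eq oS).
move=> z [w ->]; rewrite dot_sumr; apply/intrP.
rewrite rpred_sum // => i _; rewrite dotZr rpredM ?intr_int //.
have sS : S`_i \in S by rewrite mem_nth.
by rewrite -coef_nrm ?P // H // map_f.
Qed.

End Gen5.

Section Gen6.
Variable R : realType.
Variable N : nat.

Lemma tensor_Zspan (A B : seq 'rV[R]_N) :
  tensor_lattice (Zspan A) (Zspan B) = Zspan [seq tens x y | x <- A, y <- B].
Proof.
apply/seteqP; split => v.
  case=> s [Hs ->]; apply: Zspan_sum_in => p /Hs [[z ->] [w ->]].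
  rewrite tens_suml; apply: Zspan_sum_in => i _; rewrite tens_sumr.
  apply: Zspan_sum_in => j _; rewrite tensZl tensZr scalerA -intrM.
  by apply: ZspanZ; apply: Zspan_mem; apply: allpairs_f; rewrite mem_nth.
case=> z ->; elim/big_ind: _ => //.
- by exists [::]; rewrite big_nil.
- move=> x y [s [Hs ->]] [t [Ht ->]]; exists (s ++ t); rewrite big_cat; split => //.
  by move=> p; rewrite mem_cat => /orP[/Hs|/Ht].
move=> i _; have /allpairsP [p [p1 p2 ->]] := mem_nth 0 (ltn_ord i).
exists [:: ((z i)%:~R *: p.1, p.2)]; rewrite big_seq1 /= tensZl; split => //.
move=> q; rewrite inE => /eqP -> /=; split; last exact: Zspan_mem.
by apply: ZspanZ; apply: Zspan_mem.
Qed.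

End Gen6.

Set Implicit Arguments. Unset Strict Implicit. Unset Printing Implicit Defensive.

Arguments nrm {R N}.
Section Gen7.
Variable R : realType.
Variable N : nat.
Implicit Types (u v w x y : 'rV[R]_N) (S C : seq 'rV[R]_N).
Local Notation dot := (@dot R N).

Definition intvec u := forall j, u 0 j \is a Num.int.

Lemma ZnP x : Zn x <-> intvec x.
Proof.
split.
  by case=> z _ <- j; rewrite mxE intr_int.
move=> H; exists (map_mx (fun r => Num.floor r) x) => //.
by apply/matrixP => i j; rewrite !mxE ord1 floorK // H.
Qed.

Lemma dot_int u v : intvec u -> intvec v -> dot u v \is a Num.int.
Proof. by move=> hu hv; rewrite rpred_sum // => i _; rewrite rpredM. Qed.

Lemma full_span S : free S -> size S = N -> forall x, x \in <<S>>%VS.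
Proof.
move=> fS hs x; have /eqP -> : (span S == fullv).
  by rewrite eqEdim subvf dimvf /= dim_matrix (eqP fS) hs mul1r.
exact: memvf.
Qed.

Lemma orthfam_catl S C : orthfam (S ++ C) -> orthfam S.
Proof.
move=> [U O P]; move: (U); rewrite cat_uniq => /and3P[US _ _]; split => //.
  by move=> s t sS tS; apply: O; rewrite mem_cat ?sS ?tS.
by move=> s sS; apply: P; rewrite mem_cat sS.
Qed.

Lemma orthfam_catr S C : orthfam (S ++ C) -> orthfam C.
Proof.
move=> [U O P]; move: (U); rewrite cat_uniq => /and3P[_ _ UC]; split => //.
  by move=> s t sS tS; apply: O; rewrite mem_cat ?sS ?tS orbT.
by move=> s sS; apply: P; rewrite mem_cat sS orbT.
Qed.

Lemma orth_cross S C s c : orthfam (S ++ C) -> s \in S -> c \in C -> dot s c = 0.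
Proof.
move=> [U O P] sS cC; apply: O; rewrite ?mem_cat ?sS ?cC ?orbT //.
move: U; rewrite cat_uniq => /and3P[_ /hasPn H _].
by apply: contraNneq (H c cC) => <-.
Qed.

Definition pr C x := \sum_(c <- C) (dot x c / dot c c) *: c.

Lemma factor_Zspan S C : orthfam (S ++ C) -> size (S ++ C) = N ->
  (forall c, c \in C -> intvec c) ->
  (forall c, c \in C -> exists x, Zn x /\ forall c', c' \in C -> dot x c' = (c' == c)%:R) ->
  @Defs.factor R N (Zspan S) = Zspan (map nrm C).
Proof.
move=> oSC hs hC hx.
have oS := orthfam_catl oSC; have oC := orthfam_catr oSC.
have oC' := orthfam_nrm oC.
have [_ _ PC] := oC.
have pp : forall x, perp_proj [set u | u \in <<S>>%VS] x = pr C x.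
  move=> x; apply: perp_projE.
    have := expand oSC (full_span (orth_free oSC) hs x); rewrite big_cat /= => ex.
    rewrite {1}ex /pr addrK big_seq; apply: rpred_sum => s sS.
    by rewrite rpredZ // memv_span.
  apply: orth_span => s sS; rewrite /pr dot_suml big1_seq // => c cC.
  by rewrite dotZl (dotC c s) (orth_cross oSC sS cC) mulr0.
have dpr : forall x c, c \in C -> dot (pr C x) c = dot x c.
  by move=> x c cC; rewrite /pr sum_dot_seq // mulfVK // gt_eqF // PC.
rewrite /Defs.factor rspan_Zspan; apply/seteqP; split => y.
  case=> x /ZnP xZ <-; rewrite pp; apply/(ZspanP _ oC'); split.
    rewrite /pr big_seq; apply: rpred_sum => c cC; rewrite rpredZ //.
    exact: span_nrm.
  move=> t /mapP[c cC ->]; rewrite coef_nrm ?PC // dpr //.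
  exact: dot_int (hC c cC).
move=> /(ZspanP _ oC') [yS H].
have ey := expand oC' yS; rewrite big_map in ey.
have hx' : forall c, exists x, c \in C -> Zn x /\ forall c', c' \in C -> dot x c' = (c' == c)%:R.
  move=> c; case: (boolP (c \in C)) => cC; last by exists 0.
  by have [x hx1] := hx c cC; exists x.
have [g Hg] := choice hx'.
pose k c := Num.floor (dot y c).
have kE : forall c, c \in C -> (k c)%:~R = dot y c.
  move=> c cC; rewrite floorK //; have := H (nrm c) (map_f _ cC).
  by rewrite coef_nrm ?PC.
exists (\sum_(c <- C) (k c)%:~R *: g c).
  apply/ZnP => j; rewrite summxE big_seq rpred_sum // => c cC.
  rewrite mxE rpredM ?intr_int //.
  by have [/ZnP gZ _] := Hg c cC; apply: gZ.
rewrite pp {}ey /pr; apply: eq_big_seq => c cC.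
rewrite dot_suml (bigD1_seq c) //=; last by case: oC.
rewrite big_seq_cond big1 ?addr0; last first.
  move=> c' /andP[c'C nc]; rewrite dotZl.
  by have [_ ->] := Hg c' c'C; rewrite // eq_sym (negbTE nc) mulr0.
rewrite dotZl; have [_ ->] := Hg c cC; rewrite // eqxx mulr1 kE //.
by rewrite coef_nrm ?PC // /nrm scalerA.
Qed.

End Gen7.

Set Implicit Arguments. Unset Strict Implicit. Unset Printing Implicit Defensive.

Section Gen8.
Variable R : realType.
Variable N : nat.
Implicit Types (u v w x y : 'rV[R]_N) (S C : seq 'rV[R]_N).
Local Notation dot := (@dot R N).

Lemma orthfam_cons E S : orthfam (E :: S) -> orthfam S.
Proof. by move=> h; apply: (@orthfam_catr _ _ [:: E]). Qed.

Lemma slope_unit E : dot E E = 1 -> slope (Zspan [:: E]) = 0.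
Proof.
move=> hE; have oE : orthfam [:: E].
  split => //; first by move=> s t; rewrite !inE => /eqP -> /eqP ->; rewrite eqxx.
  by move=> s; rewrite inE => /eqP ->; rewrite hE.
rewrite /slope (covol_basis (orth_basis oE)) (det_gram_orth oE) big_ord1 /= hE.
by rewrite sqrtr1 ln1 oppr0 mul0r.
Qed.

Lemma inf_le0 (X : set R) : X 0 -> inf X <= 0.
Proof.
move=> X0; case: (pselect (has_lbound X)) => hl.
  exact: (ge_inf hl X0).
by rewrite inf_out // => -[_].
Qed.

Lemma mu_min_le0 E S : orthfam (E :: S) -> dot E E = 1 -> mu_min (Zspan (E :: S)) <= 0.
Proof.
move=> oT hE; have oS := orthfam_cons oT; have [UT OT PT] := oT.
have ES : E \notin S by move: UT => /= /andP[].
have EsS : forall s, s \in S -> dot E s = 0.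
  move=> s sS; apply: OT; rewrite ?inE ?eqxx ?sS ?orbT //.
  by apply: contraNneq ES => ->.
have Eperp : forall u, u \in <<S>>%VS -> dot E u = 0 by apply: orth_span.
set T := Zspan (E :: S); set M := Zspan S.
have TE : T E by apply: Zspan_mem; rewrite inE eqxx.
have spS : forall v, v \in <<S>>%VS -> v \in <<E :: S>>%VS.
  have sub : (span S <= span (E :: S))%VS.
    by apply: sub_span => s sS; rewrite inE sS orbT.
  exact: (subvP sub).
have MT : forall v, M v -> T v.
  move=> v /(ZspanP _ oS) [vS H]; apply/(ZspanP _ oT); split; first exact: spS.
  move=> s; rewrite inE => /orP[/eqP ->|/H //].
  by rewrite dotC Eperp // mul0r rpred0.
have pp : forall t, T t -> perp_proj (rspan M) t = (dot t E / dot E E) *: E.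
  move=> t Tt; rewrite rspan_Zspan; apply: perp_projE.
    have := expand oT (zspan_span Tt); rewrite big_cons => ex.
    rewrite {1}ex [X in X - _]addrC addrK big_seq; apply: rpred_sum => s sS.
    by rewrite rpredZ // memv_span.
  by move=> u uS; rewrite dotZl (Eperp u) // mulr0.
have hq : quot T M = Zspan [:: E].
  apply/seteqP; split => y.
    case=> t Tt <-; rewrite pp //.
    have /(ZspanP _ oT) [_ H] := Tt; have := H E (mem_head _ _).
    move=> /intrP [k ->]; apply: ZspanZ; exact: Zspan_mem (mem_head _ _).
  case=> z ->; rewrite big_ord1 /=; set y0 := _ *: E.
  have Ty0 : T y0 by apply: ZspanZ.
  exists y0 => //; rewrite pp // /y0 dotZl mulfK //.
  by rewrite hE oner_neq0.
apply: inf_le0; exists M.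
  split; last first.
    move=> eMT; have ME : M E by rewrite eMT.
    have := Eperp E (zspan_span ME); rewrite hE => /eqP; by rewrite oner_eq0.
  split.
    split; last exact: MT.
    by exists S; exact: orth_basis oS.
  apply/seteqP; split => v.
    case; rewrite rspan_Zspan /= => vS Tv; apply/(ZspanP _ oS); split => //.
    have /(ZspanP _ oT) [_ H] := Tv; move=> s sS; by apply: H; rewrite inE sS orbT.
  move=> Mv; split; last exact: MT.
  by rewrite rspan_Zspan /=; apply: zspan_span.
by rewrite hq slope_unit.
Qed.

End Gen8.

Set Implicit Arguments. Unset Strict Implicit. Unset Printing Implicit Defensive.

Ltac evb := repeat match goal with
 | |- context [(?x == ?y)%N] => first [
      rewrite (_ : (x == y)%N = true); [|by apply/eqP; lia]
    | rewrite (_ : (x == y)%N = false); [|by apply/negbTE/eqP; lia]]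
 end.

Section Spec.
Variable R : realType.
Variable n : nat.
Local Notation dot := (@dot R n).

Definition ev (i : nat) : 'rV[R]_n := \row_(j < n) (i == j)%:R.

Lemma dot_ev i j : (i < n)%N -> dot (ev i) (ev j) = (i == j)%:R.
Proof.
move=> hi; rewrite /dot (bigD1 (Ordinal hi)) //= !mxE eqxx mul1r big1 ?addr0.
  by rewrite eq_sym.
move=> l hl; rewrite !mxE; case: eqP => [e|]; last by rewrite mul0r.
by move: hl; rewrite -val_eqE /= e eqxx.
Qed.

Definition lin a p b q : 'rV[R]_n := a *: ev p + b *: ev q.

Lemma dot_lin a p b q c r d s : (p < n)%N -> (q < n)%N ->
  dot (lin a p b q) (lin c r d s) =
  a * c * (p == r)%:R + a * d * (p == s)%:R + b * c * (q == r)%:R + b * d * (q == s)%:R.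
Proof.
move=> hp hq; rewrite /lin !(dotDl, dotDr, dotZl, dotZr) !dot_ev //; ring.
Qed.

Lemma ev_int i : intvec (ev i).
Proof. by move=> j; rewrite mxE; case: (_ == _); rewrite ?rpred0 ?rpred1. Qed.

Lemma lin_int a p b q : a \is a Num.int -> b \is a Num.int -> intvec (lin a p b q).
Proof.
move=> ha hb j; rewrite /lin !mxE rpredD // rpredM //.
  by have := ev_int p j; rewrite mxE.
by have := ev_int q j; rewrite mxE.
Qed.

End Spec.

Section GenIdx.
Variable R : realType.
Variable N : nat.
Local Notation dot := (@dot R N).

Lemma orthfam_idx (S : seq 'rV[R]_N) :
  (forall i j, (i < size S)%N -> (j < size S)%N -> i != j -> dot S`_i S`_j = 0) ->
  (forall i, (i < size S)%N -> 0 < dot S`_i S`_i) -> orthfam S.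
Proof.
move=> O P; have U : uniq S.
  apply/(uniqP 0) => i j hi hj e; apply/eqP; apply: contraT => nij.
  by have := P i hi; rewrite {2}e O ?ltxx.
split => //.
  move=> s t /(nthP 0) [i hi <-] /(nthP 0) [j hj <-] nst.
  by apply: O => //; apply: contraNneq nst => ->.
by move=> s /(nthP 0) [i hi <-]; apply: P.
Qed.

Lemma coeff_idx (S : seq 'rV[R]_N) v w i : orthfam S -> v \in <<S>>%VS ->
  (i < size S)%N -> (forall i', (i' < size S)%N -> dot S`_i' w = (i' == i)%:R) ->
  dot v S`_i / dot S`_i S`_i = dot v w.
Proof.
move=> oS vS hi H; rewrite {2}(expand oS vS) dot_suml (big_nth 0) big_mkord.
rewrite (bigD1 (Ordinal hi)) //= dotZl H // eqxx mulr1 big1 ?addr0 // => j nj.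
by rewrite dotZl H // (_ : (j == i :> nat) = false) ?mulr0 //; apply/negbTE.
Qed.

End GenIdx.

Section GenTens.
Variable R : realType.
Variable N : nat.

Lemma orthfam_tens (A B : seq 'rV[R]_N) : orthfam A -> orthfam B ->
  orthfam [seq tens x y | x <- A, y <- B].
Proof.
move=> [UA OA PA] [UB OB PB].
have H : forall a b c d, a \in A -> b \in B -> c \in A -> d \in B -> (a, b) != (c, d) ->
    dot (tens a b) (tens c d) = 0.
  move=> a b c d aA bB cA dB ne; rewrite dot_tens.
  case: (eqVneq a c) => [ac|ac]; last by rewrite (OA a c) // mul0r.
  subst c; rewrite (OB b d) ?mulr0 //; apply/eqP => bd; by move: ne; rewrite bd eqxx.
have P : forall a b, a \in A -> b \in B -> 0 < dot (tens a b) (tens a b).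
  by move=> a b aA bB; rewrite dot_tens; apply: mulr_gt0; [apply: PA | apply: PB].
split.
- apply: allpairs_uniq => // -[a b] [c d] /allpairsP [[a' b'] [/= aA bB [-> ->]]].
  move=> /allpairsP [[c' d'] [/= cA dB [-> ->]]] /= e.
  apply/eqP; apply: contraT => ne.
  by have := P a' b' aA bB; rewrite {2}e H // ltxx.
- move=> s t /allpairsP [[a b] [/= aA bB ->]] /allpairsP [[c d] [/= cA dB ->]] ne.
  apply: H => //; apply/eqP => -[ac bd]; by move: ne; rewrite ac bd eqxx.
- by move=> s /allpairsP [[a b] [/= aA bB ->]]; apply: P.
Qed.

End GenTens.

Set Implicit Arguments. Unset Strict Implicit. Unset Printing Implicit Defensive.

Ltac evb2 := repeat match goal with
 | |- context [(?x == ?y)%N] => first [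
      rewrite (_ : (x == y)%N = true); [|by apply/eqP; lia]
    | rewrite (_ : (x == y)%N = false); [|by apply/negbTE/eqP; lia]]
 | |- context [(?x < ?y)%N] => first [
      rewrite (_ : (x < y)%N = true); [|by lia]
    | rewrite (_ : (x < y)%N = false); [|by apply/negbTE; lia]]
 end.

Ltac region i m := have : (i < m - 1 \/ i = m - 1 \/ i = m \/ i = m.+1 \/ m.+1 < i)%N by lia.

Section Spec2.
Variable R : realType.
Variables n m k : nat.
Hypothesis hm : (1 < m)%N.
Hypothesis hmn : (m < n - 1)%N.
Local Notation dot := (@dot R n).

Definition K : R := (k.+1)%:R.
Definition aW (i : nat) : R := if i == m.+1 then K else 1.
Definition bW (i : nat) : R := if i == (m - 1)%N then K else if i == m.+1 then -1 else 0.
Definition pW (i : nat) : nat :=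
  if (i < m - 1)%N then i else if i == (m - 1)%N then (m - 1)%N else if i == m then (n - 1)%N
  else if i == m.+1 then (m - 1)%N else (i - 1)%N.
Definition qW (i : nat) : nat :=
  if (i < m - 1)%N then i else if i == (m - 1)%N then m else if i == m then (n - 1)%N
  else if i == m.+1 then m else (i - 1)%N.
Definition wv i : 'rV[R]_n := @lin R n (aW i) (pW i) (bW i) (qW i).

Lemma pW_lt i : (i < n)%N -> (pW i < n)%N.
Proof.
move=> hi; region i m; case=> [?|[?|[?|[?|?]]]]; rewrite /pW; evb2 => /=; lia.
Qed.
Lemma qW_lt i : (i < n)%N -> (qW i < n)%N.
Proof.
move=> hi; region i m; case=> [?|[?|[?|[?|?]]]]; rewrite /qW; evb2 => /=; lia.
Qed.

Lemma dotW i j : (i < n)%N -> (j < n)%N ->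
  dot (wv i) (wv j) = if i == j then (if (i == (m - 1)%N) || (i == m.+1) then 1 + K ^+ 2 else 1) else 0.
Proof.
move=> hi hj; rewrite /wv dot_lin ?pW_lt ?qW_lt //.
case: (eqVneq i j) => [<-|nij].
  region i m; case=> [?|[?|[?|[?|?]]]]; rewrite /aW /bW /pW /qW; evb2 => /=; ring.
region i m; case=> [?|[?|[?|[?|?]]]]; region j m; case=> [?|[?|[?|[?|?]]]];
  rewrite /aW /bW /pW /qW; try (exfalso; lia); evb2 => /=; ring.
Qed.


Definition Bl := map wv (iota 0 m).
Definition Cl := map wv (iota m (n - m)).
Definition Wl := map wv (iota 0 n).

Lemma hmn' : (m < n)%N. Proof. lia. Qed.

Lemma BlC : Bl ++ Cl = Wl.
Proof.
rewrite /Bl /Cl /Wl -map_cat -[in iota m _](add0n m) -iotaD subnKC //.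
exact: ltnW hmn'.
Qed.

Lemma size_Bl : size Bl = m. Proof. by rewrite size_map size_iota. Qed.
Lemma size_Cl : size Cl = (n - m)%N. Proof. by rewrite size_map size_iota. Qed.
Lemma size_Wl : size Wl = n. Proof. by rewrite size_map size_iota. Qed.

Lemma nth_Wl i : (i < n)%N -> Wl`_i = wv i.
Proof. by move=> hi; rewrite (nth_map 0) ?size_iota // nth_iota. Qed.
Lemma nth_Bl i : (i < m)%N -> Bl`_i = wv i.
Proof. by move=> hi; rewrite (nth_map 0) ?size_iota // nth_iota. Qed.
Lemma nth_Cl j : (j < n - m)%N -> Cl`_j = wv (m + j).
Proof. by move=> hi; rewrite (nth_map 0) ?size_iota // nth_iota. Qed.

Lemma K_gt0 : 0 < K. Proof. by rewrite /K ltr0n. Qed.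

Lemma oWl : orthfam Wl.
Proof.
apply: orthfam_idx; rewrite size_Wl.
  move=> i j hi hj nij; rewrite !nth_Wl // dotW //; by rewrite (negbTE nij).
move=> i hi; rewrite nth_Wl // dotW // eqxx; case: ifP => _ //.
have h2 : 0 < K ^+ 2 by rewrite exprn_gt0 // K_gt0.
lra.
Qed.

Lemma oBl : orthfam Bl. Proof. by apply: (@orthfam_catl _ _ _ Cl); rewrite BlC; exact: oWl. Qed.
Lemma oCl : orthfam Cl. Proof. by apply: (@orthfam_catr _ _ Bl); rewrite BlC; exact: oWl. Qed.

Lemma K_int : K \is a Num.int. Proof. exact: natr_int. Qed.

Lemma wv_int i : intvec (wv i).
Proof.
apply: lin_int; rewrite /aW /bW; repeat case: ifP => _; 
  rewrite ?K_int ?rpred1 ?rpred0 ?rpredN1 //.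
Qed.

Lemma ev_lin i : @ev R n i = @lin R n 1 i 0 i.
Proof. by rewrite /lin scale1r scale0r addr0. Qed.

Lemma dot_W_ev i' i : (i' < m)%N -> (i < m)%N -> dot (wv i') (@ev R n i) = (i' == i)%:R.
Proof.
move=> h1 h2; have hn := hmn'; rewrite ev_lin /wv dot_lin ?pW_lt ?qW_lt; try lia.
have : (i' < m - 1 \/ i' = m - 1)%N by lia.
case=> [?|?]; rewrite /aW /bW /pW /qW; evb2 => /=; try ring.
all: have : (i < m - 1 \/ i = m - 1)%N by lia.
all: case=> [?|?]; evb2 => /=; ring.
Qed.

Lemma Bl_int s : s \in Bl -> intvec s.
Proof. by move=> /mapP [i _ ->]; apply: wv_int. Qed.
Lemma Cl_int s : s \in Cl -> intvec s.
Proof. by move=> /mapP [i _ ->]; apply: wv_int. Qed.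

Lemma L_Zn : Zspan Bl `<=` @Zn R n.
Proof.
move=> v [z ->]; apply/ZnP => j; rewrite summxE rpred_sum // => i _.
by rewrite mxE rpredM ?intr_int // Bl_int // mem_nth.
Qed.

Lemma L_prim : primitive_in (Zspan Bl) (@Zn R n).
Proof.
split; first by split; [exists Bl; exact: orth_basis oBl | exact: L_Zn].
apply/seteqP; split => v.
  case; rewrite rspan_Zspan /= => vS /ZnP vZ; apply/(ZspanP _ oBl); split => //.
  move=> s /(nthP 0) [i hi <-]; rewrite size_Bl in hi.
  rewrite (coeff_idx (w := @ev R n i) oBl vS) ?size_Bl //.
    exact: dot_int vZ (@ev_int R n i).
  by move=> i' hi'; rewrite !nth_Bl // dot_W_ev.
move=> Mv; split; last exact: L_Zn.
by rewrite rspan_Zspan /=; apply: zspan_span.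
Qed.

Lemma L_rank : rank (Zspan Bl) = m.
Proof. by rewrite (rank_basis (orth_basis oBl)) size_Bl. Qed.

Lemma L_covol : covol (Zspan Bl) = Num.sqrt (1 + K ^+ 2).
Proof.
rewrite (covol_basis (orth_basis oBl)) (det_gram_orth oBl); congr Num.sqrt.
have hm1 : (m - 1 < size Bl)%N by rewrite size_Bl; lia.
rewrite (bigD1 (Ordinal hm1)) //= big1 ?mulr1.
  by rewrite nth_Bl ?dotW ?eqxx //; lia.
move=> j nj; have hj : (j < m)%N by rewrite -size_Bl.
have hj' : (j != (m - 1)%N :> nat) by apply: contraNneq nj => e; apply/eqP/val_inj.
rewrite nth_Bl // dotW ?eqxx; try lia.
by rewrite (negbTE hj') (_ : (j == m.+1 :> nat) = false) //; apply/negbTE; lia.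
Qed.

Lemma L_height : 1 < height (Zspan Bl).
Proof.
rewrite /height L_covol expr_gt1; [|lia|exact: sqrtr_ge0].
have h2 : 0 < K ^+ 2 by rewrite exprn_gt0 // K_gt0.
rewrite -[X in X < _]sqrtr1 ltr_sqrt; lra.
Qed.

Definition xv i : 'rV[R]_n := @lin R n (if i == m.+1 then -1 else 1)
  (if i == m then (n - 1)%N else if i == m.+1 then m else (i - 1)%N) 0
  (if i == m then (n - 1)%N else if i == m.+1 then m else (i - 1)%N).

Lemma dot_xv i i' : (m <= i < n)%N -> (m <= i' < n)%N -> dot (xv i) (wv i') = (i' == i)%:R.
Proof.
move=> /andP[h1 h2] /andP[h3 h4].
have e : forall j, (m <= j < n)%N -> ((if j == m then (n - 1)%N else if j == m.+1 then m else (j - 1)%N) < n)%N.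
  move=> j /andP[? ?]; have : (j = m \/ j = m.+1 \/ m.+1 < j)%N by lia.
  by case=> [?|[?|?]]; evb2 => /=; lia.
rewrite /xv /wv dot_lin ?e ?h1 ?h2 //.
have : (i = m \/ i = m.+1 \/ m.+1 < i)%N by lia.
have : (i' = m \/ i' = m.+1 \/ m.+1 < i')%N by lia.
case=> [?|[?|?]]; case=> [?|[?|?]]; rewrite /aW /bW /pW /qW; try (exfalso; lia);
  evb2 => /=; try ring.
all: case: eqVneq => [?|?]; evb2 => /=; ring.
Qed.

Lemma dotW_pos i : (i < n)%N -> 0 < dot (wv i) (wv i).
Proof.
move=> hi; rewrite dotW // eqxx; case: ifP => _ //.
have h2 : 0 < K ^+ 2 by rewrite exprn_gt0 // K_gt0.
lra.
Qed.

Lemma wv_inj i j : (i < n)%N -> (j < n)%N -> (wv i == wv j) = (i == j).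
Proof.
move=> hi hj; apply/eqP/eqP => [e|->//]; apply/eqP; apply: contraT => nij.
have := dotW hi hj; rewrite (negbTE nij) -e => h.
by have := dotW_pos hi; rewrite h ltxx.
Qed.

Lemma L_dual : Defs.dual (Zspan Bl) = Zspan (map nrm Bl).
Proof. exact: dual_Zspan oBl. Qed.

Lemma L_factor : Defs.factor (Zspan Bl) = Zspan (map nrm Cl).
Proof.
apply: factor_Zspan; rewrite ?BlC ?size_Wl //; first exact: oWl.
  exact: Cl_int.
move=> c /mapP [i]; rewrite mem_iota subnKC ?(ltnW hmn') // => hi ->.
exists (xv i); split.
  apply/ZnP; apply: lin_int; last exact: rpred0.
  by case: ifP => _; apply/intrP; [exists (-1) | exists 1].
move=> c' /mapP [i']; rewrite mem_iota subnKC ?(ltnW hmn') // => hi' ->.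
rewrite dot_xv // wv_inj //; [by case/andP: hi' | by case/andP: hi].
Qed.

Lemma L_tangent_mu : mu_min (tangent (Zspan Bl)) <= 0.
Proof.
rewrite /tangent L_dual L_factor tensor_Zspan.
have hn0 : (0 < n - m)%N by lia.
have eB : Bl = wv 0 :: map wv (iota 1 m.-1).
  by rewrite /Bl -[in LHS](prednK (ltnW hm)).
have eC : Cl = wv m :: map wv (iota m.+1 (n - m).-1).
  by rewrite /Cl -[in LHS](prednK hn0).
have oT := orthfam_tens (orthfam_nrm oBl) (orthfam_nrm oCl).
rewrite eB eC /= in oT *; apply: (mu_min_le0 oT).
have hn : (m < n)%N := hmn'.
rewrite dot_tens !dot_nrm !dotW ?eqxx //; try lia.
rewrite (_ : (0 == (m - 1)%N) = false); last by apply/negbTE; lia.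
rewrite (_ : (m == (m - 1)%N) = false); last by apply/negbTE; lia.
by rewrite (_ : (m == m.+1) = false) ?invr1 ?mulr1 //; apply/negbTE; lia.
Qed.

Lemma L_freeness : freeness m (Zspan Bl) = 0.
Proof.
rewrite /freeness max_r ?mul0r //.
by apply: mulr_ge0_le0; [exact: ler0n | exact: L_tangent_mu].
Qed.

End Spec2.

Theorem theorem1p1 (R : realType) (m n : nat) :
  (1 < m)%N -> (m < n - 1)%N ->
  infinite_set [set L : set 'rV[R]_n |
    grass_pt m L /\ 1 < height L /\ freeness m L = 0].
Proof.
move=> hm hmn.
pose F k := Zspan (Bl R n m k).
set A := [set L | _].
have HF : forall k, A (F k).
  move=> k; split; first by split; [exact: L_prim | exact: L_rank].
  by split; [exact: L_height | exact: L_freeness].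
have inj : forall k1 k2, F k1 = F k2 -> k1 = k2.
  move=> k1 k2 e; have := congr1 (@covol R n) e; rewrite /F !L_covol //.
  move=> /(congr1 (fun x => x ^+ 2)); rewrite !sqr_sqrtr; last first.
  - by apply: addr_ge0 => //; apply: exprn_ge0; rewrite /K ler0n.
  - by apply: addr_ge0 => //; apply: exprn_ge0; rewrite /K ler0n.
  move=> /addrI; rewrite /K -!natrX => /eqP; rewrite eqr_nat eqn_exp2r // => /eqP.
  by case.
move=> finA.
pose g L := xget 0%N (fun k => F k = L).
have sub : [set: nat] `<=` g @` A.
  move=> k _; exists (F k) => //; rewrite /g; apply: xget_unique => // j.
  exact: inj.
apply: infinite_nat; apply: sub_finite_set sub _.
exact: finite_image.
Qed.
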